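(* For every $q>1$ and every positive increasing sequence $\{M_j\}_{j\ge1}$ of real numbers, $$\liminf_{j\to\infty}\frac{j\,(M_j-M_{j-1})}{M_j^{\,q}}=0.$$ *)

(* Defs.v *)
From mathcomp Require Import all_boot all_order all_algebra.
From mathcomp Require Import all_classical all_reals all_analysis.
Set Implicit Arguments. Unset Strict Implicit. Unset Printing Implicit Defensive.
Import Order.TTheory GRing.Theory Num.Theory.
Local Open Scope ring_scope.

(* The sequence j (M_j - M_{j-1}) / M_j^q, as an extended-real sequence
   (its value at j = 0 is irrelevant for the liminf). *)
Definition lemma5p1_seq (R : realType) (q : R) (M : nat -> R) : nat -> \bar R :=
  fun j => ((j%:R * (M j - M j.-1)) / (M j `^ q))%:E.

(* Main.v *)
Require Import Defs.
From mathcomp Require Import all_boot all_order all_algebra.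
From mathcomp Require Import all_classical all_reals all_analysis.
From mathcomp Require Import ring lra.
Import Order.TTheory GRing.Theory Num.Theory.
Local Open Scope ring_scope.
Lemma key (R : realType) (s a b : R) : 0 < s -> 0 < a -> 0 < b ->
  s * (b - a) / expR ((s + 1) * ln b) <= expR (- s * ln a) - expR (- s * ln b).
Proof.
move=> s0 a0 b0.
set d := ln b - ln a.
have hd : (b - a) / b <= d.
  have := expR_ge1Dx (ln a - ln b).
  rewrite expRD expRN !lnK ?posrE // /d => h.
  rewrite mulrBl divff ?gt_eqF //; lra.
have e1 : expR (- s * ln a) = expR (- s * ln b) * expR (s * d).
  by rewrite -expRD /d; congr expR; ring.
have e2 : expR ((s + 1) * ln b) = expR (s * ln b) * b.
  by rewrite mulrDl mul1r expRD lnK ?posrE.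
rewrite e1 e2 mulNr expRN.
have := expR_ge1Dx (s * d).
set E := expR (s * ln b).
have E0 : 0 < E by apply: expR_gt0.
move=> h.
rewrite -/E.
have -> : s * (b - a) / (E * b) = E^-1 * (s * ((b - a) / b)).
  by field; rewrite !gt_eqF.
rewrite -[X in _ <= _ - X]mulr1 -mulrBr ler_pM2l ?invr_gt0 //.
have : s * ((b - a) / b) <= s * d by rewrite ler_pM2l.
move=> H; apply: (le_trans H); rewrite lerBrDr addrC //.
Qed.
Lemma core (R : realType) (q : R) (M : nat -> R)
  (hq : 1 < q)
  (hpos : forall j, (1 <= j)%N -> 0 < M j)
  (key : forall s a b : R, 0 < s -> 0 < a -> 0 < b ->
    s * (b - a) / expR ((s + 1) * ln b) <= expR (- s * ln a) - expR (- s * ln b))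
  (eps : R) (n : nat) : 0 < eps ->
  exists k, (n <= k)%N /\ k%:R * (M k - M k.-1) / M k `^ q <= eps.
Proof.
move=> e0; apply: contrapT => H.
have hk k : (n <= k)%N -> eps < k%:R * (M k - M k.-1) / M k `^ q.
  move=> nk; rewrite ltNge; apply/negP => hle; apply: H; exists k; split => //.
set N := n.+1.
set s := q - 1.
have s0 : 0 < s by rewrite /s subr_gt0.
set G := fun i => expR (- s * ln (M i)).
have step i : (N <= i)%N -> s * eps * harmonic i <= G i - G i.+1.
  move=> Ni.
  have := hk i.+1 (leq_trans (leqnSn n) (leq_trans Ni (leqnSn i))).
  have a0 : 0 < M i by apply: hpos; apply: leq_trans Ni.
  have b0 : 0 < M i.+1 by apply: hpos.
  have := key s _ _ s0 a0 b0.
  have -> : s + 1 = q by rewrite /s; ring.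
  rewrite /powR gt_eqF //= -/(G i) -/(G i.+1).
  set P := expR (q * ln (M i.+1)).
  have P0 : 0 < P by apply: expR_gt0.
  move=> hkey hlt.
  apply: le_trans hkey.
  rewrite /harmonic /= -!mulrA ler_pM2l // ler_pdivrMr //.
  have -> : (M i.+1 - M i) / P * i.+1%:R = i.+1%:R * (M i.+1 - M i) / P by ring.
  exact: ltW.
have tele K : s * eps * \sum_(N <= i < N + K) harmonic i <= G N - G (N + K)%N.
  elim: K => [|K IH]; first by rewrite addn0 big_geq // mulr0 subrr.
  rewrite addnS big_nat_recr /=; last exact: leq_addr.
  rewrite mulrDr.
  apply: le_trans (lerD IH (step (N + K)%N (leq_addr _ _))) _.
  by rewrite addrA subrK.
have G0 i : 0 < G i by apply: expR_gt0.
set C := series harmonic N + G N / (s * eps).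
have bnd m : series harmonic m <= C.
  have [mN|Nm] := leqP m N.
    rewrite /C; apply: (@le_trans _ _ (series harmonic N)).
      by apply: (@nondecreasing_series _ harmonic predT 0) => // k _ _; exact: harmonic_ge0.
    by rewrite lerDl divr_ge0 ?ltW ?mulr_gt0.
  rewrite /C /series /= (big_cat_nat (n:=N)) //=; last exact: ltnW.
  rewrite lerD2l.
  have := tele (m - N)%N; rewrite subnKC; last exact: ltnW.
  move=> h; rewrite ler_pdivlMr ?mulr_gt0 // mulrC.
  apply: (le_trans h); rewrite lerBlDr lerDl; exact: ltW.
apply: (@dvg_harmonic R); apply: nondecreasing_is_cvgn.
  by apply: (@nondecreasing_series _ harmonic predT 0) => // k _ _; exact: harmonic_ge0.
by exists C => _ [m _ <-]; exact: bnd.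
Qed.

Theorem lemma5p1 (R : realType) (q : R) (M : nat -> R)
  (hq : 1 < q)
  (hpos : forall j, (1 <= j)%N -> 0 < M j)
  (hincr : forall j, (1 <= j)%N -> M j <= M j.+1) :
  limn_einf (lemma5p1_seq q M) = 0%E.
Proof.
rewrite limn_einf_lim; set u := lemma5p1_seq q M.
apply/eqP; rewrite eq_le; apply/andP; split.
- apply: lime_le; first exact: is_cvg_einfs.
  apply: nearW => n.
  apply/lee_addgt0Pr => e e0; rewrite add0e.
  have [k [nk hk]] := @core R q M hq hpos (@key R) e n e0.
  apply: ge_ereal_inf; exists (u k); first by exists k.
  by rewrite /u /lemma5p1_seq lee_fin.
- apply: lime_ge; first exact: is_cvg_einfs.
  exists 2%N => // n /= n2.
  apply: le_ereal_inf_tmp => _ [k /= nk <-].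
  rewrite /u /lemma5p1_seq lee_fin.
  have k2 : (2 <= k)%N by apply: leq_trans nk.
  have hk : k = (k.-1).+1 by rewrite prednK // (leq_trans _ k2).
  apply: divr_ge0; last exact: powR_ge0.
  apply: mulr_ge0 => //; rewrite subr_ge0 hk /=; apply: hincr.
  by rewrite -ltnS -hk.
Qed.
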